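(* Let $Q_8=\{\pm1,\pm i,\pm j,\pm k\}$ be the quaternion group. The following d-identities form a basis of d-identities of $Q_8$ (i.e. they all hold in $Q_8$, and every group satisfying all of them is isomorphic to a section of $Q_8$): (1) $\omega_8=\bigvee_{0\le i<j\le 8}(x_i=x_j)$; (2) $x^4=1$; (3) $(x_1\in\langle x_2\rangle)\vee(x_2\in\langle x_1\rangle)\vee(x_1^2x_2^2=1)$; (4) $\Big[\bigvee_{i\ne j,\ i,j\in\{1,2,3\}}x_i\in\langle x_j\rangle\Big]\vee(x_1x_2=x_3)\vee(x_1x_2=x_3^{-1})$.
   Context: A d-identity (disjunctive identity) is a universally quantified formula $\forall x_1\dots x_k\,[(f_1=1)\vee\dots\vee(f_n=1)]$ with the $f_i$ words in the free group on the variables; $u=v$ abbreviates $uv^{-1}=1$. A group satisfies it if it is true for all assignments. For a group $G$, $\mathrm{dvar}(G)$ is the class of groups satisfying every d-identity satisfied by $G$; for finite $G$ it is the class of groups isomorphic to sections (quotients of subgroups) of $G$. A set of d-identities is a basis of d-identities of $G$ if all its members hold in $G$ and every group satisfying them lies in $\mathrm{dvar}(G)$. Notation: ''$u\in\langle v\rangle$'' abbreviates $(u=1)\vee(u=v)\vee(u=v^2)\vee(u=v^3)$. *)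

(* Defs.v *)
From HB Require Import structures.
From mathcomp Require Import all_boot all_fingroup all_solvable.
Set Implicit Arguments. Unset Strict Implicit. Unset Printing Implicit Defensive.

Record Grp := MkGrp {
  gcar :> Type;
  gmul : gcar -> gcar -> gcar;
  ginv : gcar -> gcar;
  gone : gcar;
  gmulA : forall x y z, gmul x (gmul y z) = gmul (gmul x y) z;
  gmul1 : forall x, gmul gone x = x;
  gmulV : forall x, gmul (ginv x) x = gone
}.

Section DIdentities.
Variables (T : Type) (mul : T -> T -> T) (inv : T -> T) (one : T).

Fixpoint gpow (x : T) (n : nat) : T :=
  match n with 0 => one | n'.+1 => mul x (gpow x n') end.

Definition in_cyc (u v : T) : Prop :=
  u = one \/ u = v \/ u = gpow v 2 \/ u = gpow v 3.

Definition did1 : Prop :=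
  forall x : nat -> T, exists i j, i < j <= 8 /\ x i = x j.

Definition did2 : Prop := forall x : T, gpow x 4 = one.

Definition did3 : Prop := forall x1 x2 : T,
  in_cyc x1 x2 \/ in_cyc x2 x1 \/ mul (gpow x1 2) (gpow x2 2) = one.

Definition did4 : Prop := forall x1 x2 x3 : T,
  in_cyc x1 x2 \/ in_cyc x1 x3 \/ in_cyc x2 x1 \/ in_cyc x2 x3 \/
  in_cyc x3 x1 \/ in_cyc x3 x2 \/ mul x1 x2 = x3 \/ mul x1 x2 = inv x3.

Definition sat_Q8_basis : Prop := did1 /\ did2 /\ did3 /\ did4.
End DIdentities.

Definition grp_sat_basis (G : Grp) : Prop :=
  sat_Q8_basis (@gmul G) (@ginv G) (@gone G).

Definition iso_section_Q8 (G : Grp) : Prop :=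
  exists (K N : {group 'Q_8}), (N <| K)%g /\
    exists f : G -> coset_of N,
      (forall x y : G, f (gmul x y) = (f x * f y)%g) /\
      injective f /\
      (forall c : coset_of N, c \in (K / N)%g <-> exists x : G, f x = c).

(* Main.v *)
Require Import Defs.
From mathcomp Require Import all_boot all_fingroup all_solvable.
From Stdlib Require Import Classical ClassicalEpsilon.

Set Implicit Arguments. Unset Strict Implicit. Unset Printing Implicit Defensive.

Local Infix "⋅" := (@gmul _) (at level 40, left associativity).
Local Notation pw x n := (gpow (@gmul _) (@gone _) x n).

Section GrpLemmas.
Variable G : Grp.
Implicit Types x y z : G.

Lemma mulgV_ x : x ⋅ ginv x = gone G.
Proof.
rewrite -[x ⋅ _]gmul1 -(gmulV (ginv x)) -gmulA (gmulA (ginv x)) gmulV gmul1.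
by rewrite gmulV.
Qed.

Lemma mulg1_ x : x ⋅ gone _ = x.
Proof. by rewrite -(gmulV x) gmulA mulgV_ gmul1. Qed.

Lemma mulKg_ x y : ginv x ⋅ (x ⋅ y) = y.
Proof. by rewrite gmulA gmulV gmul1. Qed.

Lemma mulgI_ x y z : x ⋅ y = x ⋅ z -> y = z.
Proof. by move=> e; rewrite -(mulKg_ x y) e mulKg_. Qed.

Lemma mulIg_ x y z : y ⋅ x = z ⋅ x -> y = z.
Proof.
move=> e; rewrite -(mulg1_ y) -(mulg1_ z) -(mulgV_ x) !gmulA e //.
Qed.

Lemma mul_eq1 x y : x ⋅ y = gone _ -> x = ginv y.
Proof. by move=> e; apply: (@mulIg_ y); rewrite e gmulV. Qed.

Lemma mulV_eq1 x y : x ⋅ ginv y = gone _ -> x = y.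
Proof. by move=> e; apply: (@mulIg_ (ginv y)); rewrite e mulgV_. Qed.

Lemma gpow_add x m n : pw x (m + n) = pw x m ⋅ pw x n.
Proof. elim: m => [|m IH] /=; first by rewrite gmul1. by rewrite IH gmulA. Qed.

Lemma gpow_mul x m n : pw x (m * n) = pw (pw x m) n.
Proof. elim: n => [|n IH]; first by rewrite muln0. by rewrite mulnS gpow_add IH. Qed.

Lemma gpow1n n : pw (@gone G) n = gone G.
Proof. by elim: n => //= n ->; rewrite gmul1. Qed.

Lemma gpowSr x n : pw x n.+1 = pw x n ⋅ x.
Proof. by rewrite -addn1 gpow_add /= mulg1_. Qed.

Lemma gpow_1 x : pw x 1 = x.
Proof. by rewrite /= mulg1_. Qed.

Lemma gpow_mod4 x n : pw x 4 = gone _ -> pw x (n %% 4) = pw x n.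
Proof.
by move=> h; rewrite {2}(divn_eq n 4) gpow_add mulnC gpow_mul h gpow1n gmul1.
Qed.

End GrpLemmas.

Definition M := ('I_4 * bool)%type.
Definition mk (n : nat) (b : bool) : M := (Ordinal (ltn_pmod n (isT : 0 < 4)), b).
Definition oneM : M := mk 0 false.
Definition mulM (u v : M) : M :=
  mk (u.1 + (if u.2 then 3 * v.1 else v.1) + (if u.2 && v.2 then 2 else 0)) (u.2 (+) v.2).
Definition invM (u : M) : M := mk (if u.2 then u.1 + 2 else 4 - u.1) u.2.
Definition powM := gpow mulM oneM.
Definition in_cycb (u v : M) := [|| u == oneM, u == v, u == powM v 2 | u == powM v 3].

Ltac mcase := case=> -[[|[|[|[|?]]]] ?] [] => //.

Lemma M_did2 (u : M) : powM u 4 = oneM.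
Proof. by apply/eqP; move: u; mcase. Qed.

Lemma M_did3 (u v : M) : [|| in_cycb u v, in_cycb v u | mulM (powM u 2) (powM v 2) == oneM].
Proof. by move: u v; do 2! mcase. Qed.

Lemma M_did4 (u v w : M) :
  [|| in_cycb u v, in_cycb u w, in_cycb v u, in_cycb v w, in_cycb w u, in_cycb w v,
      mulM u v == w | mulM u v == invM w].
Proof. by move: u v w; do 3! mcase. Qed.

Lemma M_invL (u : M) : mulM (invM u) u = oneM.
Proof. by apply/eqP; move: u; mcase. Qed.

Lemma M_invR (u : M) : mulM u (invM u) = oneM.
Proof. by apply/eqP; move: u; mcase. Qed.

Lemma M_div1 (u v : M) : mulM u (invM v) = oneM -> u = v.
Proof.
have: (mulM u (invM v) == oneM) ==> (u == v) by move: u v; do 2! mcase.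
by move=> /implyP H /eqP /H /eqP.
Qed.

Definition psi (H : Grp) (a b : H) (u : M) : H :=
  pw a u.1 ⋅ (if u.2 then b else gone H).

Section HomTransfer.
Variables (H : Grp) (h : M -> H).
Hypothesis hM : forall u v, h (mulM u v) = h u ⋅ h v.
Hypothesis h1 : h oneM = gone H.

Lemma h_pow u n : h (powM u n) = pw (h u) n.
Proof. by elim: n => //= n <-; rewrite hM. Qed.

Lemma h_inv u : h (invM u) = ginv (h u).
Proof. by apply: mul_eq1; rewrite -hM M_invL h1. Qed.

Lemma h_cyc u v : in_cycb u v -> in_cyc (@gmul H) (gone H) (h u) (h v).
Proof.
by case/or4P=> /eqP ->; rewrite /in_cyc ?h1 ?h_pow; tauto.
Qed.

Hypothesis hS : forall g, exists u, h u = g.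

Lemma transfer : did2 (@gmul H) (gone H) /\ did3 (@gmul H) (gone H) /\ did4 (@gmul H) (@ginv H) (gone H).
Proof.
split; [|split].
- by move=> g; have [u <-] := hS g; rewrite -h_pow M_did2.
- move=> g1 g2; have [u <-] := hS g1; have [v <-] := hS g2.
  case/or3P: (M_did3 u v) => [/h_cyc|/h_cyc|/eqP e]; try tauto.
  by right; right; rewrite -!h_pow -hM e.
- move=> g1 g2 g3; have [u <-] := hS g1; have [v <-] := hS g2; have [w <-] := hS g3.
  have := M_did4 u v w.
  case/orP=> [/h_cyc|]; first tauto. case/orP=> [/h_cyc|]; first tauto.
  case/orP=> [/h_cyc|]; first tauto. case/orP=> [/h_cyc|]; first tauto.
  case/orP=> [/h_cyc|]; first tauto. case/orP=> [/h_cyc|]; first tauto.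
  case/orP=> /eqP e.
    by do 6! right; left; rewrite -hM e.
  by do 7! right; rewrite -hM e h_inv.
Qed.
End HomTransfer.

Section PsiHom.
Variables (H : Grp) (a b : H).
Hypotheses (a4 : pw a 4 = gone H) (b2 : pw b 2 = pw a 2) (ba : b ⋅ a = pw a 3 ⋅ b).

Lemma b_apow k : b ⋅ pw a k = pw a (3 * k) ⋅ b.
Proof.
elim: k => [|k IH]; first by rewrite /= mulg1_ gmul1.
by rewrite [pw a k.+1]/= gmulA ba -gmulA IH gmulA -gpow_add mulnS.
Qed.

Lemma psiM u v : psi a b (mulM u v) = psi a b u ⋅ psi a b v.
Proof.
case: u v => [i j] [k l]; rewrite /psi /mulM /= gpow_mod4 //.
case: j; case: l => /=.
- have bb : b ⋅ b = pw a 2 by rewrite -b2 /= mulg1_.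
  by rewrite mulg1_ (gpow_add a (i + 3 * k)) (gpow_add a i) -!gmulA (gmulA b) b_apow -gmulA bb.
- by rewrite !addn0 mulg1_ -gmulA b_apow (gpow_add a i) !gmulA.
- by rewrite !addn0 mulg1_ gpow_add gmulA.
- by rewrite !addn0 !mulg1_ gpow_add.
Qed.

Lemma psi1 : psi a b oneM = gone H.
Proof. by rewrite /psi /= gmul1. Qed.
End PsiHom.

Definition Mlist : seq M := [seq mk i j | j <- [:: false; true], i <- iota 0 4].
Lemma Mlist_size : size Mlist = 8. Proof. by []. Qed.
Lemma Mlist_uniq : uniq Mlist. Proof. by []. Qed.

Section Struct.
Variables (H : Grp) (a b : H).
Hypotheses (d1 : did1 H) (a4 : pw a 4 = gone H) (a2 : pw a 2 <> gone H)
  (nb : ~ in_cyc (@gmul H) (gone H) b a)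
  (b2 : pw b 2 = pw a 2) (ba : b ⋅ a = pw a 3 ⋅ b).

Lemma apow_eq1 (i : nat) : i < 4 -> pw a i = gone H -> i = 0.
Proof.
case: i => [|[|[|[|i]]]] // _ e.
- by case: (a2); rewrite gpow_1 in e; rewrite e gpow1n.
- case: (a2); have e4 : pw a 4 = a by rewrite -[pw a 4]/(a ⋅ pw a 3) e mulg1_.
  by rewrite -e4 a4 gpow1n.
Qed.

Lemma apowb_neq1 i : pw a i ⋅ b <> gone H.
Proof.
move=> e; apply: nb; rewrite /in_cyc; rewrite -(gpow_mod4 _ a4) in e.
have : i %% 4 < 4 by rewrite ltn_pmod.
move: (i %% 4) e => j; case: j => [|[|[|[|j]]]] // e _.
- by left; rewrite /= gmul1 in e.
- right; right; right; apply: (@mulgI_ _ a); rewrite gpow_1 in e.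
  by rewrite e; exact: esym a4.
- right; right; left; apply: (@mulgI_ _ (pw a 2)).
  by rewrite e -gpow_add; exact: esym a4.
- right; left; apply: (@mulgI_ _ (pw a 3)).
  by rewrite e -gpowSr; exact: esym a4.
Qed.

Lemma psi_ker u : psi a b u = gone H -> u = oneM.
Proof.
case: u => i j; case: j; rewrite /psi /=; first by move/apowb_neq1.
rewrite mulg1_ => /(apow_eq1 (ltn_ord i)) ei.
rewrite /oneM /mk; congr (_, _); apply: val_inj; by rewrite /= ei.
Qed.

Lemma psi_inj : injective (psi a b).
Proof.
move=> u v e; apply: M_div1; apply: psi_ker.
by rewrite (psiM a4 b2 ba) (h_inv (psiM a4 b2 ba) (psi1 a b)) e mulgV_.
Qed.

Lemma psi_surj g : exists u, psi a b u = g.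
Proof.
pose x n := nth g [seq psi a b u | u <- Mlist] n.
have [i [j [/andP [ij j8] e]]] := d1 x.
have si : size [seq psi a b u | u <- Mlist] = 8 by rewrite size_map Mlist_size.
have i8 : i < 8 by apply: leq_trans ij j8.
case: (ltnP j 8) => [j8'|j8'].
- exfalso; rewrite /x !(nth_map oneM) ?Mlist_size // in e.
  move/psi_inj: e => e.
  have := nth_uniq oneM (i:=i) (j:=j) _ _ Mlist_uniq; rewrite e eqxx Mlist_size.
  by move=> /(_ i8 j8') /esym/eqP ije; rewrite ije ltnn in ij.
- exists (nth oneM Mlist i); rewrite /x (nth_map oneM) ?Mlist_size // in e.
  by rewrite e nth_default // si.
Qed.

End Struct.

Lemma card_Q8 : #|[set: gsort (quaternion_gtype 8)]| = 8.
Proof. exact (@card_quaternion 3 isT). Qed.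

Definition Q8g : Grp := @MkGrp 'Q_8 (@mulg 'Q_8) (@invg 'Q_8) 1%g mulgA mul1g mulVg.
Local Open Scope group_scope.

Lemma gpowQ (x : 'Q_8) n : gpow (@gmul Q8g) (gone Q8g) x n = x ^+ n.
Proof. by elim: n => // n IH; rewrite /= IH expgS. Qed.


Lemma Q8_did1 : did1 'Q_8.
Proof.
move=> x.
case: (boolP [exists i : 'I_9, exists j : 'I_9, (i < j) && (x i == x j)]).
  case/existsP=> i /existsP [j /andP [ij /eqP e]].
  by exists i, j; split => //; rewrite ij /= -ltnS ltn_ord.
move/negP=> nex; exfalso.
have inj : injective (fun i : 'I_9 => x i).
  move=> i j e; apply: val_inj; case: (ltngtP i j) => // ij; case: nex; apply/existsP.
  - by exists i; apply/existsP; exists j; rewrite ij e eqxx.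
  - by exists j; apply/existsP; exists i; rewrite ij e eqxx.
by have := leq_card _ inj; rewrite card_ord -cardsT card_Q8.
Qed.

Lemma Q8_model : exists phi : M -> Q8g,
  (forall u v, phi (mulM u v) = phi u ⋅ phi v) /\ phi oneM = gone Q8g /\
  injective phi /\ (forall e, exists u, phi u = e).
Proof.
have [[x y] /= [_ xQ ox /setDP [_ nyx]] [oy y2 xy]] :=
  @generators_quaternion _ [set: 'Q_8]%G 3 isT (isog_refl _).
have a4 : gpow (@gmul Q8g) (gone Q8g) x 4 = gone Q8g.
  by rewrite gpowQ /= -(expg_order x) ox.
have a2 : gpow (@gmul Q8g) (gone Q8g) x 2 <> gone Q8g.
  by rewrite gpowQ /= => /eqP; rewrite -order_dvdn ox.
have nb : ~ in_cyc (@gmul Q8g) (gone Q8g) y x.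
  rewrite /in_cyc !gpowQ => H.
  have Hy : y \in <[x]> by case: H => [->|[->|[->|->]]]; rewrite ?group1 ?cycle_id ?mem_cycle.
  by rewrite Hy in nyx.
have b2 : gpow (@gmul Q8g) (gone Q8g) y 2 = gpow (@gmul Q8g) (gone Q8g) x 2.
  by rewrite !gpowQ y2.
have ba : (y : Q8g) ⋅ x = gpow (@gmul Q8g) (gone Q8g) x 3 ⋅ y.
  rewrite gpowQ /=.
  have -> : x ^+ 3 = x^-1 by rewrite invg_expg ox.
  have xyc : x * y = y * x^-1 by rewrite conjgC xy.
  apply: (mulgI x); by rewrite mulgA xyc -mulgA mulVg mulg1 mulKVg.
exists (@psi Q8g x y); split; first exact: (psiM a4 b2 ba).
split; first exact: (@psi1 Q8g x y).
split; first exact: (psi_inj a4 a2 nb b2 ba).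
exact (@psi_surj Q8g x y Q8_did1 a4 a2 nb b2 ba).
Qed.

Local Close Scope group_scope.

Lemma part1 : sat_Q8_basis (@mulg 'Q_8) (@invg 'Q_8) (1%g : 'Q_8).
Proof.
have [phi [phiM [phi1 [_ phiS]]]] := Q8_model.
split; first exact: Q8_did1.
exact: (transfer phiM phi1 phiS).
Qed.

Local Open Scope group_scope.

Lemma section_v1 (G : Grp) (K : {group 'Q_8}) (P : pred 'Q_8) (h : 'Q_8 -> G) :
  (forall x y : 'Q_8, x \in K -> y \in K -> h (x * y) = h x ⋅ h y) ->
  (forall g, exists x, x \in K /\ h x = g) ->
  (forall x : 'Q_8, x \in K -> (h x = gone G <-> P x)) ->
  iso_section_Q8 G.
Proof.
move=> hM hS hK.
have h1 : h 1 = gone G.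
  apply: (@mulIg_ _ (h 1)); by rewrite -hM ?group1 // mulg1 gmul1.
have hV x : x \in K -> h x^-1 = ginv (h x).
  by move=> Kx; apply: mul_eq1; rewrite -hM ?groupV // mulVg.
have hE x y : x \in K -> y \in K -> h x = h y -> h (x * y^-1) = gone G.
  by move=> Kx Ky e; rewrite hM ?groupV // hV // e mulgV_.
pose Ns := [set x in K | P x].
have gN : group_set Ns.
  apply/group_setP; split.
    by rewrite inE group1 /= -hK ?group1.
  move=> x y; rewrite !inE => /andP [Kx Px] /andP [Ky Py].
  rewrite groupM //= -hK ?groupM // hM //.
  by move: Px Py; rewrite -!hK // => -> ->; rewrite gmul1.
pose N := Group gN.
have NK : N \subset K by apply/subsetP => x; rewrite inE => /andP [].
have nNK : N <| K.
  rewrite /normal NK /=; apply/subsetP => e Ke; rewrite inE.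
  apply/subsetP => z; rewrite mem_conjg => Nz.
  have Kz : z ^ e^-1 \in K by apply: (subsetP NK).
  rewrite -(conjgKV e z); move: Nz Kz; set w := z ^ e^-1.
  rewrite inE => /andP [Kw Pw] _.
  have Kwe : e^-1 * (w * e) \in K by rewrite groupM ?groupV // groupM.
  have -> : w ^ e = e^-1 * (w * e) by [].
  have E : h (e^-1 * (w * e)) = h e^-1 ⋅ (h w ⋅ h e) by rewrite -(hM w e Kw Ke) -(hM e^-1 (w * e) (groupVr Ke) (groupM Kw Ke)).
  rewrite inE Kwe /= -hK // E.
  by move: Pw; rewrite -hK // => ->; rewrite gmul1 hV // gmulV.
have KN : K \subset 'N(N) by case/andP: nNK.
pose s g := proj1_sig (constructive_indefinite_description _ (hS g)).
have sK g : s g \in K by rewrite /s; case: constructive_indefinite_description => x [].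
have hs g : h (s g) = g by rewrite /s; case: constructive_indefinite_description => x [].
have cosE x y : x \in K -> y \in K -> (coset N x = coset N y <-> h x = h y).
  move=> Kx Ky; have nx := subsetP KN x Kx; have ny := subsetP KN y Ky.
  split.
    move/(rcoset_kercosetP nx ny); rewrite mem_rcoset inE => /andP [Kxy Pxy].
    move: Pxy; rewrite -hK // hM ?groupV // hV // => e.
    exact: mulV_eq1.
  move=> e; apply/(rcoset_kercosetP nx ny); rewrite mem_rcoset inE groupM ?groupV //=.
  by rewrite -hK ?groupM ?groupV // hE.
exists K, N; split => //.
exists (fun g => coset N (s g)); split; [|split].
- move=> g1 g2; rewrite -morphM ?(subsetP KN) //.
  by apply/cosE; rewrite ?groupM // hM // !hs.
- by move=> g1 g2 /cosE; rewrite !hs; apply.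
- move=> c; split.
    case/morphimP => e _ Ke ->; exists (h e); apply/cosE => //; by rewrite hs.
  by case=> g <-; rewrite mem_quotient.
Qed.

Lemma section_v2 (G : Grp) (KM NM : pred M) (hM : M -> G) :
  KM oneM -> (forall u v, KM u -> KM v -> KM (mulM u v)) ->
  (forall u v, KM u -> KM v -> hM (mulM u v) = hM u ⋅ hM v) ->
  (forall g, exists u, KM u /\ hM u = g) ->
  (forall u, KM u -> (hM u = gone G <-> NM u)) ->
  iso_section_Q8 G.
Proof.
move=> K1 KMM hMM hS hK.
have [phi [phiM [phi1 [phi_inj phiS]]]] := Q8_model.
pose dec (e : 'Q_8) := odflt oneM [pick u | phi u == e].
have phid e : phi (dec e) = e.
  rewrite /dec; case: pickP => [u /eqP <- //|H].
  by have [u eu] := phiS e; have := H u; rewrite eu eqxx.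
have decM (e1 e2 : 'Q_8) : dec (e1 * e2) = mulM (dec e1) (dec e2).
  by apply: phi_inj; rewrite phid phiM !phid.
have dec1 : dec 1 = oneM by apply: phi_inj; rewrite phid phi1.
have gK : group_set [set e : 'Q_8 | KM (dec e)].
  apply/group_setP; split; first by rewrite inE dec1.
  by move=> x y; rewrite !inE decM; apply: KMM.
apply: (@section_v1 G (Group gK) [pred e | NM (dec e)] (fun e => hM (dec e))).
- by move=> x y; rewrite !inE => Kx Ky; rewrite decM hMM.
- move=> g; have [u [Ku <-]] := hS g; exists (phi u); rewrite inE.
  have -> : dec (phi u) = u by apply: phi_inj; rewrite phid.
  done.
- by move=> x Kx; apply: hK; move: Kx; rewrite !inE.
Qed.

Local Close Scope group_scope.

Lemma q8_rel (G : Grp) (a b : G) :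
  did2 (@gmul G) (gone G) -> did3 (@gmul G) (gone G) ->
  pw a 2 <> gone G -> ~ in_cyc (@gmul G) (gone G) b a ->
  pw b 2 = pw a 2 /\ b ⋅ a = pw a 3 ⋅ b.
Proof.
move=> d2 d3 a2 nb; have a4 := d2 a; have b4 := d2 b.
have b2 : pw b 2 = pw a 2.
  case: (d3 a b) => [H|[H|e]].
  - exfalso; move: H; case=> [e|[e|[e|e]]].
    + by apply: a2; rewrite e gpow1n.
    + by apply: nb; right; left; rewrite e.
    + by apply: a2; rewrite e -gpow_mul; exact: b4.
    + apply: nb; right; right; right; apply: (@mulgI_ _ a).
      rewrite {1}e -gpowSr b4; exact: esym a4.
  - by case: nb.
  - apply: (@mulgI_ _ (pw a 2)); rewrite e -gpow_add; exact: esym a4.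
split => //.
case: (d3 (a ⋅ b) a) => [H|[H|e]].
- exfalso; move: H; case=> [e|[e|[e|e]]].
  + apply: nb; right; right; right; apply: (@mulgI_ _ a); rewrite e; exact: esym a4.
  + by apply: nb; left; apply: (@mulgI_ _ a); rewrite e mulg1_.
  + by apply: nb; right; left; apply: (@mulgI_ _ a); rewrite e /= mulg1_.
  + by apply: nb; right; right; left; apply: (@mulgI_ _ a); rewrite e.
- exfalso; move: H; case=> [e|[e|[e|e]]].
  + by apply: a2; rewrite e gpow1n.
  + by apply: nb; left; apply: (@mulgI_ _ a); rewrite -e mulg1_.
  + by apply: a2; rewrite e -gpow_mul; exact: d2 (a ⋅ b).
  + apply: nb; right; right; left; apply: (@mulgI_ _ (pw a 2)).
    have e1 : pw a 2 ⋅ b = gone G.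
      rewrite [pw a 2]/= mulg1_ -gmulA {1}e -gpowSr; exact: d2 (a ⋅ b).
    rewrite e1 -gpow_add; exact: esym a4.
- have e2 : b ⋅ (a ⋅ b) = a.
    have : pw (a ⋅ b) 2 = pw a 2.
      apply: (@mulIg_ _ (pw a 2)); rewrite e -gpow_add; exact: esym a4.
    by rewrite /= !mulg1_ -!gmulA => /mulgI_.
  have -> : b ⋅ a = (b ⋅ a) ⋅ (b ⋅ pw b 3).
    by rewrite -[b ⋅ pw b 3]/(pw b 4) b4 mulg1_.
  by rewrite gmulA -(gmulA b) e2 (gpowSr b 2) b2 gmulA.
Qed.

Lemma cyc_hom (G : Grp) (a : G) (u v : M) : pw a 4 = gone G -> ~~ u.2 -> ~~ v.2 ->
  pw a (mulM u v).1 = pw a u.1 ⋅ pw a v.1.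
Proof.
case: u v => i [] [k []] //= a4 _ _.
by rewrite gpow_mod4 // addn0 gpow_add.
Qed.

Lemma part2 (G : Grp) : grp_sat_basis G -> iso_section_Q8 G.
Proof.
move=> [d1 [d2 [d3 d4]]].
case: (classic (exists a : G, pw a 2 <> gone G)) => [[a a2]|nsq].
  have a4 := d2 a.
  case: (classic (exists b : G, ~ in_cyc (@gmul G) (gone G) b a)) => [[b nb]|ncyc].
    have [b2 ba] := q8_rel d2 d3 a2 nb.
    apply: (@section_v2 G (fun _ => true) (pred1 oneM) (psi a b)) => //.
    - by move=> u v _ _; exact: psiM.
    - by move=> g; have [u <-] := psi_surj d1 a4 a2 nb b2 ba g; exists u.
    - move=> u _; split => [/(psi_ker a4 a2 nb) -> //| /eqP ->]; exact: psi1.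
  have cyc (g : G) : in_cyc (@gmul G) (gone G) g a.
    by apply: NNPP => H; apply: ncyc; exists g.
  apply: (@section_v2 G (fun u : M => ~~ u.2) (pred1 oneM) (fun u => pw a u.1)) => //.
  - by move=> [i []] [k []].
  - by move=> u v; exact: cyc_hom.
  - move=> g; case: (cyc g) => [->|[->|[->|->]]].
    + by exists (mk 0 false).
    + by exists (mk 1 false); split => //; exact: gpow_1.
    + by exists (mk 2 false).
    + by exists (mk 3 false).
  - move=> u Ku; split => [e|/eqP -> //].
    case: u Ku e => i [] // _ e.
    have ei := apow_eq1 a4 a2 (ltn_ord i) e.
    rewrite /= xpair_eqE andbT; apply/eqP/val_inj; by rewrite /= ei.
have sq (g : G) : pw g 2 = gone G by apply: NNPP => H; apply: nsq; exists g.
have g4 (g : G) : pw g 4 = gone G.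
  by move: (gpow_add g 2 2); rewrite sq gmul1 => e; exact: e.
have g3 (g : G) : pw g 3 = g by rewrite (gpowSr g 2) sq gmul1.
have invg (g : G) : ginv g = g.
  have := sq g; rewrite /= mulg1_ => e; exact: esym (mul_eq1 e).
case: (classic (exists a : G, a <> gone G)) => [[a na]|nnt]; last first.
  have one (g : G) : g = gone G by apply: NNPP => H; apply: nnt; exists g.
  apply: (@section_v2 G (fun _ => true) (fun _ => true) (fun _ => gone G)).
  - by [].
  - by [].
  - by move=> u v _ _; rewrite gmul1.
  - by move=> g; exists oneM; split => //; exact: esym (one g).
  - by [].
case: (classic (exists b : G, b <> gone G /\ b <> a)) => [[b [nb1 nba]]|nb]; last first.
  have two (g : G) : g = gone G \/ g = a.
    apply: NNPP => H; apply: nb; exists g; split => e; apply: H; [left|right]; exact: e.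
  apply: (@section_v2 G (fun u : M => ~~ u.2) (fun u => ~~ odd u.1) (fun u => pw a u.1)) => //.
  - by move=> [i []] [k []].
  - by move=> u v; exact: cyc_hom.
  - move=> g; case: (two g) => ->.
    + by exists (mk 0 false).
    + by exists (mk 1 false); split => //; exact: gpow_1.
  - case=> -[[|[|[|[|i]]]] Hi] [] //= _; split => //.
    + by rewrite mulg1_ => /na.
    + by move=> _; exact: sq a.
    + by move=> e; have := g3 a; rewrite /= e => /esym /na.
have ab : b ⋅ a = a ⋅ b.
  have e : ginv b ⋅ ginv a = ginv (a ⋅ b).
    by apply: mul_eq1; rewrite -gmulA mulKg_ gmulV.
  by rewrite !invg in e.
have a4 := g4 a.
have b2 : pw b 2 = pw a 2 by rewrite !sq.
have ba : b ⋅ a = pw a 3 ⋅ b by rewrite g3.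
have ic u v : in_cyc (@gmul G) (gone G) u v -> u = gone G \/ u = v.
  by rewrite /in_cyc sq g3; tauto.
have P0f : psi a b (mk 0 false) = gone G by rewrite /psi /= gmul1.
have P1f : psi a b (mk 1 false) = a by rewrite /psi /= !mulg1_.
have P0t : psi a b (mk 0 true) = b by rewrite /psi /= gmul1.
have P1t : psi a b (mk 1 true) = a ⋅ b by rewrite /psi /= mulg1_.
apply: (@section_v2 G (fun _ => true) (fun u => ~~ odd u.1 && ~~ u.2) (psi a b)) => //.
- by move=> u v _ _; exact: psiM.
- move=> g.
  have Hab : ~ in_cyc (@gmul G) (gone G) a b by move/ic => [/na|/esym/nba].
  have Hba : ~ in_cyc (@gmul G) (gone G) b a by move/ic => [/nb1|/nba].
  case: (d4 a b g) => [/Hab [] | [H|[/Hba []|[H|[H|[H|[H|H]]]]]]].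
  + case/ic: H => [/na [] | <-]; by exists (mk 1 false); split.
  + case/ic: H => [/nb1 []| <-]; by exists (mk 0 true); split.
  + case/ic: H => ->; [by exists (mk 0 false); split | by exists (mk 1 false); split].
  + case/ic: H => ->; [by exists (mk 0 false); split | by exists (mk 0 true); split].
  + by exists (mk 1 true); split; rewrite // P1t.
  + by exists (mk 1 true); split; rewrite // P1t H invg.
- have A2 : a ⋅ (a ⋅ gone G) = gone G := sq a.
  have abn : a ⋅ b <> gone G.
    move=> e; apply: nba; have := mul_eq1 e; rewrite invg => ->; done.
  case=> -[[|[|[|[|i]]]] Hi] [] //= _; rewrite /psi /=; split => //.
  + by rewrite gmul1 => /nb1.
  + by rewrite mulg1_ => /abn.
  + by rewrite !mulg1_ => /na.
  + by rewrite A2 gmul1 => /nb1.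
  + by move=> _; rewrite A2 gmul1.
  + by rewrite A2 mulg1_ => /abn.
  + by rewrite A2 !mulg1_ => /na.
Qed.

Theorem proposition2 :
  sat_Q8_basis (@mulg 'Q_8) (@invg 'Q_8) (1%g : 'Q_8) /\
  (forall G : Grp, grp_sat_basis G -> iso_section_Q8 G).
Proof. split; [exact: part1 | exact: part2]. Qed.
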